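(* Let $\Delta \ge 3$ and $q\ge 2$ be integers, let $\alpha = \frac{1}{1000 \log (q\Delta)}$ and $g_\alpha(k) = \sum_{i=0}^{k-1} q^{\alpha i} = \frac{q^{\alpha k}-1}{q^\alpha-1}$. Then $$\beta(\alpha) := \sum_{k=1}^{\Delta} \binom{\Delta}{k} \frac{(2\Delta-1)^{(\Delta-k)(1-\alpha)}}{(2\Delta)^{\Delta(1-\alpha)}}\, g_\alpha(k+1) < 1.$$
   Context: $\log$ denotes the natural logarithm. *)

(* Defs.v *)
From Stdlib Require Import Reals.
Open Scope R_scope.

Definition alpha (q D : nat) : R := 1 / (1000 * ln (INR q * INR D)).

Definition g_alpha (q : nat) (a : R) (k : nat) : R :=
  match k with
  | O => 0
  | S m => sum_f_R0 (fun i => Rpower (INR q) (a * INR i)) m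
  end.

Definition beta (q D : nat) (a : R) : R :=
  sum_f 1 D (fun k =>
    C D k * Rpower (2 * INR D - 1) ((INR D - INR k) * (1 - a))
      / Rpower (2 * INR D) (INR D * (1 - a)) * g_alpha q a (k + 1)).

(* Main.v *)
Require Import Defs.
From Stdlib Require Import Reals.
From Stdlib Require Import Lra Lia.
Open Scope R_scope.
Lemma my_exp_le x y : x <= y -> exp x <= exp y.
Proof. intros [H|H]; [left; apply exp_increasing; exact H | subst; lra]. Qed.

Lemma my_ln_le x y : 0 < x -> x <= y -> ln x <= ln y.
Proof. intros Hx [H|H]; [left; apply ln_increasing; lra | subst; lra]. Qed.

Lemma exp_pow y n : exp y ^ n = exp (INR n * y).
Proof.
  induction n as [|n IH]; simpl.
  - rewrite Rmult_0_l, exp_0; reflexivity.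
  - rewrite IH, <- exp_plus. f_equal. destruct n; simpl; ring.
Qed.

Lemma pow_exp z n : 0 < z -> z ^ n = exp (INR n * ln z).
Proof. intros Hz. rewrite <- exp_pow, exp_ln; auto. Qed.

Lemma exp_up y r : 0 <= y < 1 -> 1 <= r * (1 - y) -> exp y <= r.
Proof.
  intros Hy Hr. pose proof (exp_ineq1_le (- y)) as H.
  assert (E : exp y * exp (- y) = 1) by (rewrite <- exp_plus, Rplus_opp_r, exp_0; auto).
  pose proof (exp_pos y). nra.
Qed.

Lemma exp_dbl_up z r r' : exp z <= r -> r * r <= r' -> exp (2 * z) <= r'.
Proof.
  intros H1 H2. replace (2 * z) with (z + z) by ring. rewrite exp_plus.
  pose proof (exp_pos z). nra.
Qed.

Lemma exp_dbl_dn z r r' : 0 <= r -> r <= exp z -> r' <= r * r -> r' <= exp (2 * z).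
Proof.
  intros H0 H1 H2. replace (2 * z) with (z + z) by ring. rewrite exp_plus. nra.
Qed.

Lemma exp_U : exp (251/998) <= 3216509/2500000.
Proof.
  replace (251/998) with (2*(2*(2*(2*(2*(2*(251/998/64))))))) by field.
  apply (exp_dbl_up _ (2268571/2000000)); [|lra].
  apply (exp_dbl_up _ (2662571/2500000)); [|lra].
  apply (exp_dbl_up _ (10320021/10000000)); [|lra].
  apply (exp_dbl_up _ (8127/8000)); [|lra].
  apply (exp_dbl_up _ (5039531/5000000)); [|lra].
  apply (exp_dbl_up _ (10039453/10000000)); [|lra].
  apply exp_up; lra.
Qed.

Lemma exp_L : 273629/500000 <= exp (-(3/5)).
Proof.
  replace (-(3/5)) with (2*(2*(2*(2*(2*(2*(-(3/320)))))))) by field.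
  apply (exp_dbl_dn _ (7397689/10000000)); [lra| |lra].
  apply (exp_dbl_dn _ (4300491/5000000)); [lra| |lra].
  apply (exp_dbl_dn _ (2318537/2500000)); [lra| |lra].
  apply (exp_dbl_dn _ (4815119/5000000)); [lra| |lra].
  apply (exp_dbl_dn _ (4906689/5000000)); [lra| |lra].
  apply (exp_dbl_dn _ (317/320)); [lra| |lra].
  pose proof (exp_ineq1_le (-(3/320))). lra.
Qed.

Lemma kp1_le k : (1 <= k)%nat -> INR k + 1 <= 4/3 * (3/2)^k.
Proof.
  intros Hk. destruct k as [|k]; [lia|]. clear Hk.
  induction k as [|k IH]; [simpl; lra|].
  rewrite !S_INR in *. simpl pow in *. pose proof (pos_INR k). lra.
Qed.

Lemma C_nonneg n k : 0 <= C n k.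
Proof.
  unfold C. apply Rmult_le_pos; [apply pos_INR|].
  left; apply Rinv_0_lt_compat, Rmult_lt_0_compat; apply INR_fact_lt_0.
Qed.

Lemma C_n0 n : C n 0 = 1.
Proof.
  unfold C. rewrite Nat.sub_0_r. simpl Factorial.fact. simpl INR.
  field. apply INR_fact_neq_0.
Qed.

Lemma g_bound q a k : (1 <= q)%nat -> 0 <= a ->
  g_alpha q a (k + 1) <= (INR k + 1) * exp (a * INR k * ln (INR q)).
Proof.
  intros Hq Ha. rewrite Nat.add_1_r. simpl g_alpha.
  assert (Hlq : 0 <= ln (INR q)).
  { rewrite <- ln_1. apply my_ln_le; [lra|]. apply (le_INR 1) in Hq. simpl in Hq. lra. }
  apply Rle_trans with (sum_f_R0 (fun _ => exp (a * INR k * ln (INR q))) k).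
  - apply sum_Rle. intros j Hj. unfold Rpower. apply my_exp_le.
    apply le_INR in Hj. apply Rmult_le_compat_r; [exact Hlq|].
    apply Rmult_le_compat_l; lra.
  - rewrite sum_cte, S_INR. lra.
Qed.

Lemma term_le (D q k : nat) (a : R) :
  (3 <= D)%nat -> (2 <= q)%nat -> (1 <= k <= D)%nat -> 0 <= a ->
  exp a <= 1000/999 -> exp (a * (ln (INR q) + ln (2 * INR D))) <= 500/499 ->
  C D k * Rpower (2 * INR D - 1) ((INR D - INR k) * (1 - a))
      / Rpower (2 * INR D) (INR D * (1 - a)) * g_alpha q a (k + 1)
  <= C D k * (750/499 / (2 * INR D)) ^ k * ((2 * INR D - 1) / (2 * INR D)) ^ (D - k)
     * (4/3 * (1000/999)).
Proof.
  intros hD hq hk Ha Hea Hc.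
  set (Dr := INR D) in *. set (kr := INR k) in *.
  assert (HD : 3 <= Dr) by (unfold Dr; apply (le_INR 3) in hD; simpl in hD; lra).
  assert (Hk1 : 1 <= kr) by (unfold kr; assert (H1k : (1 <= k)%nat) by lia; apply (le_INR 1) in H1k; simpl in H1k; lra).
  assert (HkD : kr <= Dr) by (unfold kr, Dr; apply le_INR; lia).
  set (x := 2 * Dr - 1) in *. set (N := 2 * Dr) in *.
  assert (Hx : 0 < x) by (unfold x, N; lra).
  assert (HN : 0 < N) by (unfold N; lra).
  set (lx := ln x) in *. set (L := ln N) in *. set (lq := ln (INR q)) in *.
  set (c := exp (a * (lq + L))) in *.
  assert (Hlq : 0 <= lq).
  { unfold lq. rewrite <- ln_1. apply my_ln_le; [lra|]. apply (le_INR 2) in hq. simpl in hq. lra. }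
  assert (HLx1 : L - lx <= 1 / x).
  { pose proof (exp_ineq1_le (1 / x)) as H.
    assert (E : L - lx = ln (1 + 1/x)).
    { unfold L, lx. replace (1 + 1/x) with (N * / x) by (unfold x, N; field; lra).
      rewrite ln_mult; [|lra|apply Rinv_0_lt_compat; lra]. rewrite ln_Rinv; [ring|lra]. }
    rewrite E. assert (0 < 1/x) by (apply Rdiv_lt_0_compat; lra).
    apply Rle_trans with (ln (exp (1/x))); [apply my_ln_le; lra | rewrite ln_exp; lra]. }
  assert (HLx0 : 0 <= L - lx).
  { unfold L, lx. assert (ln x <= ln N) by (apply my_ln_le; unfold x, N; lra). lra. }
  assert (HDx : (Dr - kr) * (L - lx) <= 1).
  { apply Rle_trans with (Dr * (1/x)).
    - apply Rmult_le_compat; lra.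
    - unfold x, N. unfold Rdiv. rewrite Rmult_1_l. apply (Rmult_le_reg_r (2*Dr-1)); [lra|]. rewrite Rmult_assoc, Rinv_l; lra. }
  pose proof (g_bound q a k ltac:(lia) Ha) as Hg. fold kr lq in Hg.
  assert (E1 : (750/499 / N) ^ k = (750/499)^k * exp (kr * - L)).
  { unfold Rdiv at 1. rewrite Rpow_mult_distr, (pow_exp (/ N) k); [|apply Rinv_0_lt_compat; auto].
    rewrite ln_Rinv; auto. }
  assert (E2 : (x / N) ^ (D - k) = exp ((Dr - kr) * (lx - L))).
  { rewrite pow_exp; [|apply Rdiv_lt_0_compat; auto]. rewrite minus_INR; [|lia].
    unfold Rdiv. rewrite ln_mult; [|lra|apply Rinv_0_lt_compat; lra]. rewrite ln_Rinv; [reflexivity|lra]. }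
  fold N x. rewrite E1, E2.
  assert (Hck : c ^ k <= (500/499)^k).
  { apply pow_incr. pose proof (exp_pos (a * (lq + L))). fold c in H. lra. }
  assert (Hcexp : c ^ k = exp (kr * (a * (lq + L)))) by (unfold c; rewrite exp_pow; reflexivity).
  pose proof (kp1_le k ltac:(lia)) as Hkp. fold kr in Hkp.
  assert (Hexp : exp ((Dr - kr) * (1 - a) * lx) / exp (Dr * (1 - a) * L) * exp (a * kr * lq)
      <= exp a * c ^ k * (exp (kr * - L) * exp ((Dr - kr) * (lx - L)))).
  { rewrite Hcexp. unfold Rdiv. rewrite <- exp_Ropp, <- !exp_plus. apply my_exp_le.
    assert (0 <= a * (1 - (Dr - kr) * (L - lx))) by (apply Rmult_le_pos; lra).
    nra. }
  unfold Rpower. fold lx L.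
  pose proof (C_nonneg D k) as HC.
  assert (Hpos1 : 0 <= exp ((Dr - kr) * (1 - a) * lx) / exp (Dr * (1 - a) * L)).
  { unfold Rdiv. apply Rmult_le_pos; [left; apply exp_pos| left; apply Rinv_0_lt_compat, exp_pos]. }
  set (P := exp (kr * - L) * exp ((Dr - kr) * (lx - L))).
  assert (HP : 0 < P) by (unfold P; apply Rmult_lt_0_compat; apply exp_pos).
  fold P in Hexp.
  apply Rle_trans with (C D k * exp ((Dr - kr) * (1 - a) * lx) / exp (Dr * (1 - a) * L)
        * ((kr + 1) * exp (a * kr * lq))).
  { apply Rmult_le_compat_l; [|exact Hg]. unfold Rdiv. rewrite Rmult_assoc. apply Rmult_le_pos; auto. }
  replace (C D k * exp ((Dr - kr) * (1 - a) * lx) / exp (Dr * (1 - a) * L)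
        * ((kr + 1) * exp (a * kr * lq))) with
      (C D k * (kr + 1) * (exp ((Dr - kr) * (1 - a) * lx) / exp (Dr * (1 - a) * L) * exp (a * kr * lq))) by (unfold Rdiv; ring).
  replace (C D k * ((750 / 499) ^ k * exp (kr * - L)) * exp ((Dr - kr) * (lx - L)) * (4 / 3 * (1000 / 999)))
    with (C D k * (4/3 * (3/2)^k * (1000/999) * (500/499)^k * P)).
  2:{ unfold P. replace (750/499) with (3/2 * (500/499)) by field. rewrite Rpow_mult_distr. ring. }
  apply Rle_trans with (C D k * (kr + 1) * (exp a * c ^ k * P)).
  { apply Rmult_le_compat_l; [|exact Hexp]. apply Rmult_le_pos; lra. }
  rewrite !Rmult_assoc. apply Rmult_le_compat_l; auto.
  assert (0 <= c ^ k) by (apply pow_le; left; apply exp_pos).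
  assert (0 < exp a) by apply exp_pos.
  assert (0 <= (3/2)^k) by (apply pow_le; lra).
  apply Rle_trans with ((4/3*(3/2)^k) * ((1000/999) * ((500/499)^k * P))); [|right; ring].
  apply Rmult_le_compat; try lra.
  { apply Rmult_le_pos; [left; auto | apply Rmult_le_pos; lra]. }
  apply Rmult_le_compat; try lra.
  { apply Rmult_le_pos; lra. }
  apply Rmult_le_compat_r; lra.
Qed.

Theorem proposition4p15 (D q : nat) (hD : (3 <= D)%nat) (hq : (2 <= q)%nat) :
  beta q D (alpha q D) < 1.
Proof.
  assert (HD : 3 <= INR D) by (apply (le_INR 3) in hD; simpl in hD; lra).
  assert (Hq : 2 <= INR q) by (apply (le_INR 2) in hq; simpl in hq; lra).
  set (l := ln (INR q * INR D)).
  assert (Hl1 : 1 < l).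
  { unfold l. rewrite <- (ln_exp 1). apply ln_increasing; [apply exp_pos|].
    pose proof exp_le_3. nra. }
  assert (Hl2 : ln 2 <= l).
  { unfold l. apply my_ln_le; nra. }
  assert (Hlsplit : l = ln (INR q) + ln (INR D)) by (unfold l; apply ln_mult; lra).
  set (a := alpha q D).
  assert (Ha : a = 1 / (1000 * l)) by reflexivity.
  assert (Ha0 : 0 <= a) by (rewrite Ha; left; apply Rdiv_lt_0_compat; lra).
  assert (Ha1 : a * 1000 * l = 1) by (rewrite Ha; field; lra).
  assert (Hea : exp a <= 1000/999).
  { apply exp_up; [split; nra|]. nra. }
  assert (Hc : exp (a * (ln (INR q) + ln (2 * INR D))) <= 500/499).
  { rewrite ln_mult by lra.
    assert (HA : a * (ln (INR q) + (ln 2 + ln (INR D))) = a * ln 2 + a * l) by (rewrite Hlsplit; ring).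
    rewrite HA. pose proof ln_lt_2. apply exp_up; [split; nra|]. nra. }
  set (X := 750/499 / (2 * INR D)).
  set (Y := (2 * INR D - 1) / (2 * INR D)).
  set (K := 4/3 * (1000/999)).
  unfold beta, sum_f. fold a.
  apply Rle_lt_trans with (sum_f_R0 (fun i => C D (S i) * X ^ (S i) * Y ^ (D - S i) * K) (pred D)).
  { rewrite Nat.sub_1_r. apply sum_Rle. intros i Hi.
    pose proof (term_le D q (i + 1) a hD hq ltac:(lia) Ha0 Hea Hc) as H.
    rewrite Nat.add_1_r in H. rewrite Nat.add_1_r. exact H. }
  rewrite <- scal_sum.
  assert (Hbin : (X + Y) ^ D - Y ^ D = sum_f_R0 (fun i => C D (S i) * X ^ (S i) * Y ^ (D - S i)) (pred D)).
  { rewrite binomial, decomp_sum by lia. rewrite C_n0, Nat.sub_0_r. simpl pow at 1. ring. }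
  rewrite <- Hbin.
  assert (HU : (X + Y) ^ D <= 3216509/2500000).
  { eapply Rle_trans; [|apply exp_U].
    set (t := 251/499 / (2 * INR D)).
    assert (E : X + Y = 1 + t) by (unfold X, Y, t; field; lra).
    rewrite E. apply Rle_trans with (exp t ^ D).
    - apply pow_incr. pose proof (exp_ineq1_le t). assert (0 <= t) by (unfold t; left; apply Rdiv_lt_0_compat; lra). lra.
    - rewrite exp_pow. right. f_equal. unfold t. field. lra. }
  assert (HL : 273629/500000 <= Y ^ D).
  { eapply Rle_trans; [apply exp_L|].
    set (s := 1 / (2 * INR D - 1)).
    assert (Hs : 0 < s) by (unfold s; apply Rdiv_lt_0_compat; lra).
    assert (HeY : exp (- s) <= Y).
    { pose proof (exp_ineq1_le s) as H1.
      assert (E : exp s * exp (- s) = 1) by (rewrite <- exp_plus, Rplus_opp_r, exp_0; auto).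
      pose proof (exp_pos (- s)).
      assert (Es : (1 + s) * (2 * INR D - 1) = 2 * INR D) by (unfold s; field; lra).
      unfold Y. apply (Rmult_le_reg_r (2 * INR D)); [lra|].
      unfold Rdiv. rewrite Rmult_assoc, Rinv_l by lra. nra. }
    apply Rle_trans with (exp (- s) ^ D).
    - rewrite exp_pow. apply my_exp_le. unfold s.
      apply (Rmult_le_reg_r (2 * INR D - 1)); [lra|].
      unfold Rdiv. field_simplify; lra.
    - apply pow_incr. pose proof (exp_pos (- s)). lra. }
  unfold K. lra.
Qed.
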